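(* Let $n\ge 2$ and let $\mathsf r=[r_1,\dots,r_{2n-2}]$ be a tree-like factorization of $\lambda_n$. For $j=1,\dots,2n-2$, the element $(r_1\cdots r_{j-1})\,r_j\,(r_{j-1}\cdots r_1)$ is a reflection of the form $(\!(0,m_j)\!)$, where $m_j$ is its value at $0$. Then $\mathsf r$ is cyclic if and only if $m_1<m_2<\dots<m_{2n-2}$.
   Context: The affine symmetric group $\widetilde S_n$ is the group, under composition $(vw)(k)=v(w(k))$, of bijections $w:\mathbb Z\to\mathbb Z$ with $w(i+n)=w(i)+n$ and $\sum_{i=1}^n w(i)=\binom{n+1}{2}$. For $i\not\equiv j\pmod n$, $(\!(i,j)\!)$ is the affine reflection interchanging $i+kn$ and $j+kn$ for all $k\in\mathbb Z$; $(\!(i,j)\!)=(\!(j,i)\!)=(\!(i+kn,j+kn)\!)$. For an integer $i$, ''$i\bmod n$'' denotes the representative of $i$ modulo $n$ in $\{1,\dots,n\}$. Let $\lambda_n$ be the element with $\lambda_n(k)=k+n$ for $k\not\equiv0\pmod n$ and $\lambda_n(k)=k-n(n-1)$ for $k\equiv 0\pmod n$; its reflection length is $2n-2$. $\textsc{fact}(\lambda_n)$ is the set of sequences $[r_1,\dots,r_{2n-2}]$ of reflections with $r_1\cdots r_{2n-2}=\lambda_n$. Such a sequence is tree-like if one can write $r_i=(\!(a_{i-1},b_i)\!)$ with integers $a_{i-1}<b_i$ ($1\le i\le 2n-2$) and $a_i\equiv b_i\pmod n$ ($1\le i\le 2n-3$). For a tree-like $\mathsf r$ so written and $k\in[n]$,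 let $N_{\mathsf r}(k)$ be the list, in increasing order of $i$, of the values $b_i\bmod n$ over all $i$ with $a_{i-1}\equiv k\pmod n$. A tree-like $\mathsf r$ is cyclic if (i) $N_{\mathsf r}(n)$ is strictly increasing, and (ii) for every $1\le k<n$, writing $N_{\mathsf r}(k)=[c_1,\dots,c_\ell]$, there exists $1\le j\le \ell$ with $c_j<c_{j+1}<\dots<c_{\ell-1}<k<c_1<\dots<c_{j-1}$ (note $c_\ell$ does not appear; it is replaced by $k$). *)

(* Defs.v *)
(* affine permutations as functions Z -> Z. *)
From Stdlib Require Import ZArith List Sorting.Sorted Lia.
Import ListNotations.
Open Scope Z_scope.

(* The affine reflection ((i,j)) in \tilde S_n: swaps i+kn and j+kn for all k. *)
Definition refl (n i j : Z) : Z -> Z :=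
  fun k => if Z.eq_dec (k mod n) (i mod n) then k - i + j
           else if Z.eq_dec (k mod n) (j mod n) then k - j + i
           else k.

Definition is_reflection (n : Z) (w : Z -> Z) : Prop :=
  exists i j, i mod n <> j mod n /\ forall k, w k = refl n i j k.

Definition lambda (n : Z) : Z -> Z :=
  fun k => if Z.eqb (k mod n) 0 then k - n * (n - 1) else k + n.

(* product r_1 r_2 ... r_m, with (vw)(k) = v(w(k)) *)
Definition prodl (l : list (Z -> Z)) : Z -> Z :=
  fold_right (fun f g => fun k => f (g k)) (fun k => k) l.

(* 1-based access: r_i *)
Definition nthr (r : list (Z -> Z)) (i : nat) : Z -> Z :=
  nth (i - 1) r (fun k => k).

Definition in_fact (n : Z) (r : list (Z -> Z)) : Prop :=
  Z.of_nat (length r) = 2 * n - 2 /\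
  Forall (is_reflection n) r /\
  forall k, prodl r k = lambda n k.

Definition tree_like_with (n : Z) (r : list (Z -> Z)) (a b : nat -> Z) : Prop :=
  (forall i : nat, (1 <= i <= length r)%nat ->
     a (i - 1)%nat < b i /\ forall k, nthr r i k = refl n (a (i - 1)%nat) (b i) k) /\
  (forall i : nat, (1 <= i <= length r - 1)%nat -> a i mod n = b i mod n).

Definition tree_like (n : Z) (r : list (Z -> Z)) : Prop :=
  exists a b, tree_like_with n r a b.

(* "x mod n": representative in {1, ..., n} *)
Definition modn1 (n x : Z) : Z := (x - 1) mod n + 1.

Definition Nr (n : Z) (r : list (Z -> Z)) (a b : nat -> Z) (k : Z) : list Z :=
  map (fun i => modn1 n (b i))
      (filter (fun i => Z.eqb ((a (i - 1)%nat - k) mod n) 0) (seq 1 (length r))).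

(* condition (ii) for a given list c = [c_1, ..., c_l] and k:
   exists 1 <= j <= l with c_j < ... < c_{l-1} < k < c_1 < ... < c_{j-1} *)
Definition cyc_cond (c : list Z) (k : Z) : Prop :=
  exists j : nat, (1 <= j <= length c)%nat /\
    Sorted Z.lt (skipn (j - 1) (removelast c) ++ [k] ++ firstn (j - 1) c).

Definition cyclic (n : Z) (r : list (Z -> Z)) : Prop :=
  exists a b, tree_like_with n r a b /\
    Sorted Z.lt (Nr n r a b n) /\
    (forall k, 1 <= k < n -> cyc_cond (Nr n r a b k) k).

Definition conjr (r : list (Z -> Z)) (j : nat) : Z -> Z :=
  fun x => prodl (firstn (j - 1) r)
             (nthr r j (prodl (rev (firstn (j - 1) r)) x)).

Definition mval (r : list (Z -> Z)) (j : nat) : Z := conjr r j 0.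

(* Main.v *)
Require Import Defs.
From Stdlib Require Import ZArith List Sorting.Sorted Lia.
Import ListNotations.
Open Scope Z_scope.

Lemma modeq_ex n x y : n > 0 -> x mod n = y mod n -> exists k, x = y + k*n.
Proof.
  intros Hn H. exists (x / n - y / n).
  pose proof (Z.div_mod x n ltac:(lia)). pose proof (Z.div_mod y n ltac:(lia)).
  rewrite H in H0. rewrite Z.mul_sub_distr_r. lia.
Qed.

Lemma ex_modeq n x y k : x = y + k*n -> x mod n = y mod n.
Proof. intros ->. apply Z_mod_plus_full. Qed.

Lemma mod_shift n a b x : n > 0 -> x mod n = a mod n -> (x - a + b) mod n = b mod n.
Proof. intros Hn H. destruct (modeq_ex n x a Hn H) as [k ->].
  apply ex_modeq with k; lia. Qed.

Lemma refl_case n a b x : n > 0 -> a mod n <> b mod n ->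
  (x mod n = a mod n /\ refl n a b x = x - a + b) \/
  (x mod n = b mod n /\ refl n a b x = x - b + a) \/
  (x mod n <> a mod n /\ x mod n <> b mod n /\ refl n a b x = x).
Proof.
  intros Hn Hab. unfold refl.
  destruct (Z.eq_dec (x mod n) (a mod n)); [left; auto|].
  destruct (Z.eq_dec (x mod n) (b mod n)); [right; left; auto|].
  right; right; auto.
Qed.

Lemma refl_per n a b x k : n > 0 -> refl n a b (x + k*n) = refl n a b x + k*n.
Proof. intros Hn. unfold refl. rewrite Z_mod_plus_full.
  destruct (Z.eq_dec (x mod n) (a mod n)); [lia|].
  destruct (Z.eq_dec (x mod n) (b mod n)); lia. Qed.

Lemma refl_mod n a b x : n > 0 -> a mod n <> b mod n ->
  refl n a b x mod n = (if Z.eq_dec (x mod n) (a mod n) then b mod n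
     else if Z.eq_dec (x mod n) (b mod n) then a mod n else x mod n).
Proof.
  intros Hn Hab. unfold refl.
  destruct (Z.eq_dec (x mod n) (a mod n)); [apply mod_shift; auto|].
  destruct (Z.eq_dec (x mod n) (b mod n)); [apply mod_shift; auto|]. auto.
Qed.

Lemma refl_inv n a b x : n > 0 -> a mod n <> b mod n -> refl n a b (refl n a b x) = x.
Proof.
  intros Hn Hab.
  destruct (refl_case n a b x Hn Hab) as [[H1 H2]|[[H1 H2]|[H1 [H4 H2]]]]; rewrite H2.
  - pose proof (mod_shift n a b x Hn H1) as M.
    destruct (refl_case n a b (x - a + b) Hn Hab) as [[G1 G2]|[[G1 G2]|[G1 [G2 G3]]]].
    + congruence.
    + lia.
    + congruence.
  - pose proof (mod_shift n b a x Hn H1) as M.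
    destruct (refl_case n a b (x - b + a) Hn Hab) as [[G1 G2]|[[G1 G2]|[G1 [G2 G3]]]].
    + lia.
    + congruence.
    + congruence.
  - rewrite H2. auto.
Qed.

Lemma refl_cinj n a b x x' : n > 0 -> a mod n <> b mod n ->
  refl n a b x mod n = refl n a b x' mod n -> x mod n = x' mod n.
Proof.
  intros Hn Hab. rewrite !refl_mod by auto.
  destruct (Z.eq_dec (x mod n) (a mod n)); destruct (Z.eq_dec (x mod n) (b mod n));
  destruct (Z.eq_dec (x' mod n) (a mod n)); destruct (Z.eq_dec (x' mod n) (b mod n));
  intros; congruence.
Qed.

Lemma refl_ccomp n a b x x' : n > 0 -> a mod n <> b mod n ->
  x mod n = x' mod n -> refl n a b x mod n = refl n a b x' mod n.
Proof.
  intros Hn Hab H. rewrite !refl_mod by auto. rewrite H. auto.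
Qed.

Lemma refl_shift n a b a' b' x : n > 0 -> a mod n = a' mod n -> b - a = b' - a' ->
  refl n a b x = refl n a' b' x.
Proof.
  intros Hn H1 H2. destruct (modeq_ex n a a' Hn H1) as [k Hk].
  assert (Hb : b mod n = b' mod n) by (apply ex_modeq with k; lia).
  unfold refl. rewrite H1, Hb.
  destruct (Z.eq_dec (x mod n) (a' mod n)); [lia|].
  destruct (Z.eq_dec (x mod n) (b' mod n)); lia.
Qed.

Lemma refl_uniq n a b a' b' : n > 0 -> a < b -> a' < b' ->
  (forall x, refl n a b x = refl n a' b' x) -> a mod n = a' mod n /\ b mod n = b' mod n.
Proof.
  intros Hn Hab Hab' H. specialize (H a). unfold refl at 1 in H.
  destruct (Z.eq_dec (a mod n) (a mod n)); [|congruence].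
  unfold refl in H.
  destruct (Z.eq_dec (a mod n) (a' mod n)).
  - split; auto. destruct (modeq_ex n a a' Hn e0) as [k Hk].
    apply ex_modeq with k; lia.
  - destruct (Z.eq_dec (a mod n) (b' mod n)); lia.
Qed.

Definition SS := StronglySorted Z.lt.

Lemma sorted_SS l : Sorted Z.lt l <-> SS l.
Proof. split; [apply Sorted_StronglySorted; intros a b c; lia | apply StronglySorted_Sorted]. Qed.

Lemma SS_cons x l : SS (x :: l) <-> SS l /\ forall b, In b l -> x < b.
Proof. split.
  - intros H. apply StronglySorted_inv in H. destruct H. split; auto. apply Forall_forall; auto.
  - intros [H1 H2]. constructor; auto. apply Forall_forall; auto. Qed.

Lemma SS_app l1 l2 : SS (l1 ++ l2) <-> SS l1 /\ SS l2 /\ (forall a b, In a l1 -> In b l2 -> a < b).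
Proof.
  induction l1 as [|x l1 IH]; simpl.
  - split; [intros; repeat split; auto; [constructor|intros a b []]|tauto].
  - rewrite !SS_cons, IH. split.
    + intros [[H1 [H2 H3]] H4]. repeat split; auto.
      * intros b Hb. apply H4, in_app_iff; auto.
      * intros a b [<-|Ha] Hb; auto. apply H4, in_app_iff; auto.
    + intros [[H1 H2] [H3 H4]]. repeat split; auto.
      intros b Hb. apply in_app_iff in Hb. destruct Hb; auto.
Qed.

Lemma SS_map (g : Z -> Z) l : (forall a b, In a l -> In b l -> a < b -> g a < g b) -> SS l -> SS (map g l).
Proof.
  induction l as [|x l IH]; simpl; intros Hg H; [constructor|].
  rewrite SS_cons in *. destruct H as [H1 H2]. split.
  - apply IH; auto; intros; apply Hg; auto.
  - intros b Hb. apply in_map_iff in Hb. destruct Hb as [z [<- Hz]]. apply Hg; auto.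
Qed.

Lemma SS_map_rev (g : Z -> Z) l : (forall a b, In a l -> In b l -> g a < g b -> a < b) -> SS (map g l) -> SS l.
Proof.
  induction l as [|x l IH]; simpl; intros Hg H; [constructor|].
  rewrite SS_cons in *. destruct H as [H1 H2]. split.
  - apply IH; auto; intros; apply Hg; auto.
  - intros b Hb. apply Hg; auto. apply H2. apply in_map; auto.
Qed.

Lemma fval n k x : 1 <= k < n -> 1 <= x <= n -> x <> k ->
  (k < x -> (x - k) mod n = x - k) /\ (x < k -> (x - k) mod n = x - k + n).
Proof.
  intros Hk Hx Hxk. split; intros H.
  - apply Z.mod_small. lia.
  - rewrite <- (Z_mod_plus_full (x - k) 1 n). rewrite Z.mod_small; lia.
Qed.

Lemma split_lt n k d : 1 <= k < n -> (forall x, In x d -> 1 <= x <= n /\ x <> k) ->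
  SS (map (fun x => (x - k) mod n) d) ->
  exists A B, d = A ++ B /\ (forall a, In a A -> k < a) /\ (forall b, In b B -> b < k).
Proof.
  intros Hk. induction d as [|x d IH]; intros Hd H.
  - exists [], []. simpl. repeat split; auto; intros a [].
  - simpl in H. rewrite SS_cons in H. destruct H as [H1 H2].
    destruct (IH (fun z Hz => Hd z (or_intror Hz)) H1) as [A [B [E [HA HB]]]].
    destruct (Hd x (or_introl eq_refl)) as [Hx1 Hx2].
    destruct (Z.lt_ge_cases k x).
    + exists (x :: A), B. rewrite E. repeat split; auto.
      intros a [<-|Ha]; auto.
    + exists [], (x :: d). repeat split; auto; [intros a []|].
      intros b [<-|Hb]; [lia|].
      destruct (Hd b (or_intror Hb)) as [Hb1 Hb2].
      destruct (Z.lt_ge_cases b k); auto. exfalso.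
      specialize (H2 ((b - k) mod n) (in_map _ _ _ Hb)).
      rewrite (proj1 (fval n k b Hk Hb1 Hb2)) in H2 by lia.
      rewrite (proj2 (fval n k x Hk Hx1 Hx2)) in H2 by lia. lia.
Qed.

Lemma cyc_core n k d : 1 <= k < n -> (forall x, In x d -> 1 <= x <= n /\ x <> k) ->
  ((exists j, (j <= length d)%nat /\ Sorted Z.lt (skipn j d ++ [k] ++ firstn j d)) <->
   Sorted Z.lt (map (fun x => (x - k) mod n) d)).
Proof.
  intros Hk Hd. rewrite sorted_SS. split.
  - intros [j [Hj H]]. rewrite sorted_SS in H.
    rewrite <- (firstn_skipn j d) in Hd |- *.
    set (A := firstn j d) in *. set (B := skipn j d) in *.
    apply SS_app in H. destruct H as [HB [HkA HBkA]]. simpl in HkA. apply SS_cons in HkA.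
    destruct HkA as [HA HkA'].
    assert (HBk : forall b, In b B -> b < k) by (intros; apply HBkA; simpl; auto).
    rewrite map_app. apply SS_app. repeat split.
    + apply SS_map; auto. intros a b Ha Hb Hab.
      destruct (Hd a ltac:(apply in_app_iff; auto)). destruct (Hd b ltac:(apply in_app_iff; auto)).
      pose proof (HkA' a Ha). pose proof (HkA' b Hb).
      rewrite (proj1 (fval n k a Hk H H0)), (proj1 (fval n k b Hk H1 H2)) by lia. lia.
    + apply SS_map; auto. intros a b Ha Hb Hab.
      destruct (Hd a ltac:(apply in_app_iff; auto)). destruct (Hd b ltac:(apply in_app_iff; auto)).
      pose proof (HBk a Ha). pose proof (HBk b Hb).
      rewrite (proj2 (fval n k a Hk H H0)), (proj2 (fval n k b Hk H1 H2)) by lia. lia.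
    + intros a' b' Ha Hb. apply in_map_iff in Ha, Hb.
      destruct Ha as [a [<- Ha]]. destruct Hb as [b [<- Hb]].
      destruct (Hd a ltac:(apply in_app_iff; auto)). destruct (Hd b ltac:(apply in_app_iff; auto)).
      pose proof (HkA' a Ha). pose proof (HBk b Hb).
      rewrite (proj1 (fval n k a Hk H H0)), (proj2 (fval n k b Hk H1 H2)) by lia. lia.
  - intros H. destruct (split_lt n k d Hk Hd H) as [A [B [E [HA HB]]]].
    exists (length A). split; [rewrite E, length_app; lia|].
    rewrite E. rewrite skipn_app, firstn_app, skipn_all2, firstn_all2, Nat.sub_diag by lia.
    simpl. rewrite app_nil_r. rewrite sorted_SS.
    rewrite E, map_app in H. apply SS_app in H. destruct H as [H1 [H2 H3]].
    assert (HdA : forall x, In x A -> 1 <= x <= n /\ x <> k) by (intros; apply Hd; rewrite E; apply in_app_iff; auto).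
    assert (HdB : forall x, In x B -> 1 <= x <= n /\ x <> k) by (intros; apply Hd; rewrite E; apply in_app_iff; auto).
    apply SS_app. repeat split.
    + apply SS_map_rev with (g := fun x => (x - k) mod n); auto.
      intros a b Ha Hb. destruct (HdB a Ha), (HdB b Hb). pose proof (HB a Ha). pose proof (HB b Hb).
      rewrite (proj2 (fval n k a Hk H H0)), (proj2 (fval n k b Hk H4 H5)) by lia. lia.
    + apply SS_cons. split; auto.
      apply SS_map_rev with (g := fun x => (x - k) mod n); auto.
      intros a b Ha Hb. destruct (HdA a Ha), (HdA b Hb). pose proof (HA a Ha). pose proof (HA b Hb).
      rewrite (proj1 (fval n k a Hk H H0)), (proj1 (fval n k b Hk H4 H5)) by lia. lia.
    + intros a b Ha Hb. pose proof (HB a Ha). destruct Hb as [<-|Hb]; auto.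
      pose proof (HA b Hb). lia.
Qed.

Lemma cyc_cond_iff n k c : c <> [] -> 1 <= k < n -> (forall x, In x c -> 1 <= x <= n /\ x <> k) ->
  (cyc_cond c k <-> Sorted Z.lt (map (fun x => (x - k) mod n) (removelast c))).
Proof.
  intros Hc Hk Hx. rewrite <- cyc_core; auto.
  2:{ intros x Hx'. apply Hx. rewrite (app_removelast_last 0 Hc). apply in_app_iff. auto. }
  pose proof (app_removelast_last 0 Hc) as E.
  set (d := removelast c) in *.
  assert (Hlen : length c = S (length d)) by (rewrite E at 1; rewrite length_app; simpl; lia).
  assert (Hf : forall j, (j <= length d)%nat -> firstn j c = firstn j d).
  { intros j Hj. rewrite E, firstn_app. replace (j - length d)%nat with 0%nat by lia. simpl. apply app_nil_r. }
  unfold cyc_cond. split.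
  - intros [j [Hj H]]. exists (j-1)%nat. split; [lia|]. rewrite <- Hf by lia. auto.
  - intros [j [Hj H]]. exists (S j). split; [lia|]. simpl (S j - 1)%nat. rewrite Nat.sub_0_r.
    rewrite Hf by lia. auto.
Qed.

Lemma filter_seq_first (P : nat -> bool) a m f rest : filter P (seq a m) = f :: rest ->
  P f = true /\ (a <= f < a + m)%nat /\ forall t, (a <= t < f)%nat -> P t = false.
Proof.
  revert a. induction m; intros a H; simpl in H; [discriminate|].
  destruct (P a) eqn:Pa.
  - injection H; intros _ <-. repeat split; auto; lia.
  - apply IHm in H. destruct H as [H1 [H2 H3]]. repeat split; auto; try lia.
    intros t Ht. destruct (Nat.eq_dec t a); [subst; auto|]. apply H3; lia.
Qed.

Lemma sorted_filter_seq (P : nat -> bool) (g : nat -> Z) a m :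
  Sorted Z.lt (map g (filter P (seq a m))) <->
  (forall i i', (a <= i < i' /\ i' < a + m)%nat -> P i = true -> P i' = true ->
     (forall t, (i < t < i')%nat -> P t = false) -> g i < g i').
Proof.
  revert a. induction m; intros a.
  - simpl. split; [intros; lia|constructor].
  - simpl. destruct (P a) eqn:Pa.
    + simpl. split.
      * intros H i i' Hi Pi Pi' Hb. inversion H; subst.
        destruct (Nat.eq_dec i a).
        -- subst i. destruct (filter P (seq (S a) m)) as [|f rest] eqn:E.
           ++ exfalso. assert (In i' (filter P (seq (S a) m))) by (apply filter_In; split; auto; apply in_seq; lia).
              rewrite E in H0. destruct H0.
           ++ apply filter_seq_first in E. destruct E as [Pf [Hf Hbf]].
              assert (f = i').
              { destruct (Nat.lt_total f i') as [Hl|[He|Hg]]; auto.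
                - specialize (Hb f ltac:(lia)). congruence.
                - specialize (Hbf i' ltac:(lia)). congruence. }
              subst f. simpl in H3. inversion H3; auto.
        -- apply (proj1 (IHm (S a)) H2); auto. lia.
      * intros H. constructor.
        -- apply IHm. intros i i' Hi Pi Pi' Hb. apply H; auto. lia.
        -- destruct (filter P (seq (S a) m)) as [|f rest] eqn:E; simpl; constructor.
           apply filter_seq_first in E. destruct E as [Pf [Hf Hbf]].
           apply H; [lia|auto|auto|intros t Ht; apply Hbf; lia].
    + rewrite IHm. split; intros H i i' Hi Pi Pi' Hb.
      * destruct (Nat.eq_dec i a); [subst; congruence|]. apply H; auto. lia.
      * apply H; auto. lia.
Qed.

Lemma map_removelast {A B} (g : A -> B) l : removelast (map g l) = map g (removelast l).
Proof. induction l as [|a l IH]; auto. destruct l as [|b l]; auto.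
  change (removelast (map g (a :: b :: l))) with (g a :: removelast (map g (b :: l))).
  rewrite IH. auto. Qed.

Lemma filter_nil {A} (P : A -> bool) l : (forall x, In x l -> P x = false) -> filter P l = [].
Proof. induction l; simpl; intros H; auto. rewrite H by auto. apply IHl. auto. Qed.
Section Main.
Variable n : Z.
Variable N : nat.
Variable y : nat -> Z.
Hypothesis Hn : 2 <= n.
Hypothesis HN : Z.of_nat N = 2*n - 2.
Hypothesis Hinc : forall i, (1 <= i <= N)%nat -> y (i-1)%nat < y i.
Hypothesis Hnc : forall i, (1 <= i <= N)%nat -> y (i-1)%nat mod n <> y i mod n.

Definition Rf (i : nat) : Z -> Z := refl n (y (i-1)%nat) (y i).
Fixpoint W (j : nat) (x : Z) : Z :=
  match j with O => x | S j' => W j' (Rf (S j') x) end.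
Fixpoint V (j : nat) (x : Z) : Z :=
  match j with O => x | S j' => Rf (S j') (V j' x) end.

Hypothesis Hlam : forall x, W N x = lambda n x.

Lemma npos : n > 0. Proof. lia. Qed.
Hint Resolve npos : core.

Lemma Rf_S j : Rf (S j) = refl n (y j) (y (S j)).
Proof. unfold Rf. simpl. rewrite Nat.sub_0_r. auto. Qed.

Lemma Hnc' j : (j < N)%nat -> y j mod n <> y (S j) mod n.
Proof. intros. pose proof (Hnc (S j) ltac:(lia)). simpl in H0. rewrite Nat.sub_0_r in H0. auto. Qed.

Lemma W_per j x k : W j (x + k*n) = W j x + k*n.
Proof. revert x. induction j; intros x; simpl; auto.
  rewrite Rf_S, refl_per by auto. rewrite IHj. auto. Qed.

Lemma V_per j x k : V j (x + k*n) = V j x + k*n.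
Proof. revert x. induction j; intros x; simpl; auto.
  rewrite Rf_S, IHj, refl_per by auto. auto. Qed.

Lemma W_ccomp j x x' : x mod n = x' mod n -> W j x mod n = W j x' mod n.
Proof. intros H. destruct (modeq_ex n x x' npos H) as [k ->].
  rewrite W_per. apply ex_modeq with k; auto. Qed.

Lemma V_ccomp j x x' : x mod n = x' mod n -> V j x mod n = V j x' mod n.
Proof. intros H. destruct (modeq_ex n x x' npos H) as [k ->].
  rewrite V_per. apply ex_modeq with k; auto. Qed.

Lemma W_cinj j x x' : (j <= N)%nat -> W j x mod n = W j x' mod n -> x mod n = x' mod n.
Proof. revert x x'. induction j; intros x x' Hj H; simpl in *; auto.
  rewrite Rf_S in H. apply IHj in H; [|lia].
  eapply refl_cinj; eauto. apply Hnc'. lia. Qed.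

Lemma V_cinj j x x' : (j <= N)%nat -> V j x mod n = V j x' mod n -> x mod n = x' mod n.
Proof. revert x x'. induction j; intros x x' Hj H; simpl in *; auto.
  rewrite Rf_S in H. apply IHj; [lia|].
  eapply refl_cinj; eauto. apply Hnc'. lia. Qed.

Lemma WV j x : (j <= N)%nat -> W j (V j x) = x.
Proof. revert x. induction j; intros x Hj; simpl; auto.
  rewrite Rf_S, refl_inv; [apply IHj; lia | auto | apply Hnc'; lia]. Qed.

Lemma VW j x : (j <= N)%nat -> V j (W j x) = x.
Proof. revert x. induction j; intros x Hj; simpl; auto.
  rewrite IHj by lia. rewrite Rf_S, refl_inv; auto. apply Hnc'; lia. Qed.

Lemma Wy j : (j <= N)%nat -> W j (y j) = y 0%nat.
Proof. induction j; intros Hj; simpl; auto.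
  rewrite Rf_S. pose proof (Hnc' j ltac:(lia)).
  destruct (refl_case n (y j) (y (S j)) (y (S j)) npos H) as [[H1 H2]|[[H1 H2]|[H1 [H2 H3]]]].
  - congruence.
  - rewrite H2. replace (y (S j) - y (S j) + y j) with (y j) by lia. apply IHj; lia.
  - congruence. Qed.

Lemma Vy j : (j <= N)%nat -> V j (y 0%nat) = y j.
Proof. induction j; intros Hj; simpl; auto.
  rewrite IHj by lia. rewrite Rf_S. pose proof (Hnc' j ltac:(lia)).
  destruct (refl_case n (y j) (y (S j)) (y j) npos H) as [[H1 H2]|[[H1 H2]|[H1 [H2 H3]]]].
  - rewrite H2. lia.
  - congruence.
  - congruence. Qed.

Lemma y_inc i i' : (i < i' <= N)%nat -> y i < y i'.
Proof. intros [H1 H2]. induction H1.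
  - pose proof (Hinc (S i) ltac:(lia)). simpl in H. rewrite Nat.sub_0_r in H. auto.
  - pose proof (Hinc (S m) ltac:(lia)). simpl in H. rewrite Nat.sub_0_r in H.
    specialize (IHle ltac:(lia)). lia. Qed.

Lemma NN : (2 <= N)%nat.
Proof. lia. Qed.

Lemma y0_yN : y 0%nat mod n = 0 /\ y N = y 0%nat + n*(n-1).
Proof.
  pose proof (Wy N (le_n _)) as H. rewrite Hlam in H. unfold lambda in H.
  pose proof (y_inc 0 N ltac:(pose proof NN; lia)).
  destruct (Z.eqb_spec (y N mod n) 0).
  - split; [|lia]. replace (y 0%nat) with (y N + (-(n-1))*n) by lia.
    rewrite Z_mod_plus_full. auto.
  - lia.
Qed.

Lemma y0mod : y 0%nat mod n = 0. Proof. apply y0_yN. Qed.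


Definition ell (t : nat) : Z := y t - y (t-1)%nat.
Definition hit (v : Z) (t : nat) : bool := Z.eqb (V (t-1)%nat v mod n) (y t mod n).
Definition hits (v : Z) (j : nat) : list nat := filter (hit v) (seq 1 j).
Definition sumZ (l : list Z) : Z := fold_right Z.add 0 l.
Definition sumN (l : list nat) : nat := fold_right Nat.add 0%nat l.
Definition tok (v : Z) : Prop := 1 <= v <= n - 1.

Lemma tok_mod v : tok v -> v mod n = v.
Proof. intros H. apply Z.mod_small. unfold tok in H. lia. Qed.

Lemma tok_ne_y v t : tok v -> (t <= N)%nat -> V t v mod n <> y t mod n.
Proof. intros Hv Ht E. rewrite <- (Vy t Ht) in E. apply V_cinj in E; auto.
  rewrite tok_mod, y0mod in E by auto. unfold tok in Hv. lia. Qed.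

Lemma ell_pos t : (1 <= t <= N)%nat -> 0 < ell t.
Proof. intros. unfold ell. pose proof (Hinc t H). lia. Qed.

Lemma ell_ne_n t : (1 <= t <= N)%nat -> ell t <> n.
Proof. intros H E. apply (Hnc t H). unfold ell in E.
  apply ex_modeq with (-1). lia. Qed.

Lemma V_step v t : tok v -> (1 <= t <= N)%nat ->
  V t v = if hit v t then V (t-1)%nat v - ell t else V (t-1)%nat v.
Proof.
  intros Hv Ht. destruct t as [|t]; [lia|]. simpl V. rewrite Rf_S.
  unfold hit, ell. simpl (S t - 1)%nat. rewrite Nat.sub_0_r.
  pose proof (Hnc' t ltac:(lia)) as Hab.
  destruct (refl_case n (y t) (y (S t)) (V t v) npos Hab) as [[H1 H2]|[[H1 H2]|[H1 [H2 H3]]]].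
  - exfalso. apply (tok_ne_y v t); auto; lia.
  - rewrite H2, H1, Z.eqb_refl. lia.
  - rewrite H3. destruct (Z.eqb_spec (V t v mod n) (y (S t) mod n)); congruence.
Qed.

Lemma sumZ_app l1 l2 : sumZ (l1 ++ l2) = sumZ l1 + sumZ l2.
Proof. induction l1; simpl; auto. rewrite IHl1. lia. Qed.

Lemma V_hits v j : tok v -> (j <= N)%nat -> V j v = v - sumZ (map ell (hits v j)).
Proof.
  intros Hv. induction j; intros Hj; [simpl; lia|].
  rewrite V_step by (auto; lia). simpl (S j - 1)%nat. rewrite Nat.sub_0_r.
  unfold hits. rewrite seq_S, filter_app, map_app, sumZ_app. simpl (1 + j)%nat.
  simpl filter. fold (hits v j). rewrite IHj by lia.
  destruct (hit v (S j)); simpl; lia.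
Qed.

Lemma VN v : tok v -> V N v = v - n.
Proof.
  intros Hv. assert (W N (v - n) = v).
  { rewrite Hlam. unfold lambda.
    replace (v - n) with (v + (-1)*n) by lia. rewrite Z_mod_plus_full, tok_mod by auto.
    destruct (Z.eqb_spec v 0); unfold tok in Hv; lia. }
  rewrite <- H at 1. apply VW. lia.
Qed.

Lemma sum_hits v : tok v -> sumZ (map ell (hits v N)) = n.
Proof. intros Hv. pose proof (V_hits v N Hv (le_n _)). rewrite VN in H; auto. lia. Qed.

Lemma in_hits v t j : In t (hits v j) <-> (1 <= t <= j)%nat /\ hit v t = true.
Proof. unfold hits. rewrite filter_In, in_seq. split; intros [A B]; split; auto; lia. Qed.

Definition toks : list Z := map Z.of_nat (seq 1 (Z.to_nat (n-1))).

Lemma in_toks v : In v toks <-> tok v.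
Proof. unfold toks, tok. rewrite in_map_iff. split.
  - intros [x [<- Hx]]. apply in_seq in Hx. lia.
  - intros H. exists (Z.to_nat v). split; [lia|]. apply in_seq. lia. Qed.

Lemma toks_nodup : NoDup toks.
Proof. unfold toks. apply NoDup_map_NoDup_ForallPairs; [intros a b _ _; lia|]. apply seq_NoDup. Qed.

Lemma toks_len : length toks = Z.to_nat (n-1).
Proof. unfold toks. rewrite length_map, length_seq. auto. Qed.

Definition tokhit (t : nat) : Z := W (t-1)%nat (y t) mod n.

Lemma tokhit_ok t : (1 <= t <= N)%nat -> tok (tokhit t) /\ hit (tokhit t) t = true.
Proof.
  intros Ht. split.
  - unfold tok, tokhit. pose proof (Z.mod_pos_bound (W (t-1)%nat (y t)) n ltac:(lia)).
    split; [|lia]. destruct (Z.eq_dec (W (t - 1) (y t) mod n) 0); [|lia].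
    exfalso. apply (Hnc t Ht). apply (W_cinj (t-1)); [lia|].
    rewrite e, Wy by lia. rewrite y0mod. auto.
  - unfold hit, tokhit. apply Z.eqb_eq. rewrite (V_ccomp _ _ (W (t - 1) (y t))).
    + rewrite VW by lia. auto.
    + apply Z.mod_mod. lia.
Qed.

Lemma tokhit_uniq v t : tok v -> (1 <= t <= N)%nat -> hit v t = true -> v = tokhit t.
Proof.
  intros Hv Ht H. unfold hit in H. apply Z.eqb_eq in H.
  apply (W_ccomp (t-1)) in H. rewrite WV in H by lia.
  unfold tokhit. rewrite <- H. rewrite tok_mod; auto.
Qed.

Lemma filter_one {A} (l : list A) (P : A -> bool) v0 : NoDup l -> In v0 l -> P v0 = true ->
  (forall v, In v l -> P v = true -> v = v0) -> length (filter P l) = 1%nat.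
Proof.
  induction l as [|a l IH]; intros Hnd Hin HP Hu; [destruct Hin|].
  inversion Hnd; subst. simpl. destruct Hin as [->|Hin].
  - rewrite HP. simpl. f_equal.
    assert (filter P l = []); [|rewrite H; auto].
    destruct (filter P l) as [|b l'] eqn:E; auto. exfalso.
    assert (In b (filter P l)) by (rewrite E; left; auto).
    apply filter_In in H. destruct H. specialize (Hu b (or_intror H) H0). subst. auto.
  - destruct (P a) eqn:Pa.
    + exfalso. specialize (Hu a (or_introl eq_refl) Pa). subst. auto.
    + apply IH; auto. intros v Hv Pv. apply Hu; auto. right; auto.
Qed.

Lemma sumN_plus {A} (l : list A) f g :
  sumN (map (fun v => f v + g v)%nat l) = (sumN (map f l) + sumN (map g l))%nat.
Proof. induction l; simpl; auto. rewrite IHl. lia. Qed.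

Lemma sum_ind {A} (l : list A) (P : A -> bool) :
  sumN (map (fun v => if P v then 1%nat else 0%nat) l) = length (filter P l).
Proof. induction l; simpl; auto. destruct (P a); simpl; auto. Qed.

Lemma count_hits j : (j <= N)%nat -> sumN (map (fun v => length (hits v j)) toks) = j.
Proof.
  induction j; intros Hj.
  - unfold hits. simpl. clear. induction toks; simpl; auto.
  - transitivity (sumN (map (fun v => length (hits v j) + (if hit v (S j) then 1 else 0))%nat toks)).
    + f_equal. apply map_ext. intros v. unfold hits. rewrite seq_S, filter_app, length_app.
      simpl (1 + j)%nat. simpl. destruct (hit v (S j)); simpl; auto.
    + rewrite sumN_plus, IHj by lia. rewrite sum_ind.
      rewrite (filter_one toks (fun v => hit v (S j)) (tokhit (S j))); auto.
      * lia.
      * apply toks_nodup.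
      * apply in_toks. apply tokhit_ok. lia.
      * apply tokhit_ok. lia.
      * intros v Hv Hh. apply tokhit_uniq; auto; [apply in_toks; auto|lia].
Qed.

Lemma hits_ge2 v : tok v -> (2 <= length (hits v N))%nat.
Proof.
  intros Hv. pose proof (sum_hits v Hv).
  destruct (hits v N) as [|t [|t' l]] eqn:E; simpl in H; simpl; try lia.
  assert (In t (hits v N)) by (rewrite E; left; auto).
  apply in_hits in H0. destruct H0. exfalso. apply (ell_ne_n t); auto. lia.
Qed.

Lemma sumN_ge2 (l : list nat) : (forall x, In x l -> 2 <= x)%nat -> (2 * length l <= sumN l)%nat.
Proof. induction l; simpl; intros H; auto. pose proof (H a (or_introl eq_refl)).
  specialize (IHl (fun x Hx => H x (or_intror Hx))). lia.
  Qed.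

Lemma all2 (l : list nat) : (forall x, In x l -> 2 <= x)%nat -> sumN l = (2 * length l)%nat ->
  forall x, In x l -> x = 2%nat.
Proof.
  induction l as [|a l IH]; intros H1 H2 x Hx; [destruct Hx|].
  simpl in H2. pose proof (sumN_ge2 l (fun z Hz => H1 z (or_intror Hz))).
  pose proof (H1 a (or_introl eq_refl)).
  destruct Hx as [<-|Hx]; [lia|]. apply IH; auto; [intros; apply H1; right; auto|lia].
Qed.

Lemma hits2 v : tok v -> length (hits v N) = 2%nat.
Proof.
  intros Hv. apply (all2 (map (fun v => length (hits v N)) toks)).
  - intros x Hx. apply in_map_iff in Hx. destruct Hx as [w [<- Hw]]. apply hits_ge2, in_toks; auto.
  - rewrite count_hits, length_map, toks_len; lia.
  - apply in_map_iff. exists v; split; auto. apply in_toks; auto.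
Qed.

Definition p (v : Z) : nat := hd 0%nat (hits v N).
Definition q (v : Z) : nat := hd 0%nat (tl (hits v N)).

Lemma hitsN v : tok v -> hits v N = [p v; q v].
Proof. intros Hv. pose proof (hits2 v Hv). unfold p, q.
  destruct (hits v N) as [|a [|b [|c l]]]; simpl in *; try lia. auto. Qed.

Lemma filter_seq_head (P : nat -> bool) a m x l : filter P (seq a m) = x :: l ->
  (a <= x)%nat /\ forall z, In z l -> (x < z)%nat.
Proof.
  revert a. induction m; intros a H; simpl in H; [discriminate|].
  destruct (P a) eqn:Pa.
  - injection H; intros <- <-. split; auto. intros z Hz. apply filter_In in Hz.
    destruct Hz as [Hz _]. apply in_seq in Hz. lia.
  - apply IHm in H. destruct H; split; [lia|auto].
Qed.

Lemma pq_props v : tok v -> (1 <= p v /\ p v < q v /\ q v <= N)%nat.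
Proof.
  intros Hv. pose proof (hitsN v Hv). pose proof H as H'. unfold hits in H.
  apply filter_seq_head in H. destruct H as [H1 H2].
  specialize (H2 (q v) (or_introl eq_refl)).
  assert (In (q v) (hits v N)) by (rewrite H'; right; left; auto).
  apply in_hits in H. lia.
Qed.

Lemma hit_iff v t : tok v -> (1 <= t <= N)%nat -> (hit v t = true <-> t = p v \/ t = q v).
Proof.
  intros Hv Ht. pose proof (in_hits v t N). rewrite hitsN in H by auto. simpl in H.
  split; intros.
  - assert (HH : (1 <= t <= N)%nat /\ hit v t = true) by auto. apply H in HH. intuition.
  - apply H. intuition.
Qed.

Lemma ell_pq v : tok v -> ell (p v) + ell (q v) = n.
Proof. intros Hv. pose proof (sum_hits v Hv). rewrite hitsN in H by auto. simpl in H. lia. Qed.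

Lemma V_pos v j : tok v -> (j <= N)%nat ->
  V j v = if (j <? p v)%nat then v else if (j <? q v)%nat then v - ell (p v) else v - n.
Proof.
  intros Hv. pose proof (pq_props v Hv) as Hpq. pose proof (ell_pq v Hv).
  induction j; intros Hj.
  - simpl. destruct (Nat.ltb_spec 0 (p v)); lia.
  - rewrite V_step by (auto; lia). simpl (S j - 1)%nat. rewrite Nat.sub_0_r.
    rewrite IHj by lia.
    destruct (hit v (S j)) eqn:Hh.
    + apply hit_iff in Hh; [|auto|lia].
      destruct Hh as [Hh|Hh]; rewrite Hh;
      repeat match goal with |- context [Nat.ltb ?a ?b] => destruct (Nat.ltb_spec a b) end; lia.
    + assert (S j <> p v /\ S j <> q v).
      { split; intro E; assert (hit v (S j) = true) by (apply hit_iff; auto; lia); congruence. }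
      repeat match goal with |- context [Nat.ltb ?a ?b] => destruct (Nat.ltb_spec a b) end; lia.
Qed.

Lemma T1a v : tok v -> y (p v) mod n = v.
Proof.
  intros Hv. pose proof (pq_props v Hv).
  assert (hit v (p v) = true) by (apply hit_iff; auto; lia).
  unfold hit in H0. apply Z.eqb_eq in H0. rewrite V_pos in H0 by (auto; lia).
  destruct (Nat.ltb_spec (p v - 1) (p v)); [|lia]. rewrite tok_mod in H0; auto.
Qed.

Lemma ypm1 v : tok v -> (v - ell (p v)) mod n = y (p v - 1)%nat mod n.
Proof.
  intros Hv. unfold ell. replace (v - (y (p v) - y (p v - 1)%nat)) with (v - y (p v) + y (p v - 1)%nat) by lia.
  apply mod_shift; auto. rewrite T1a, tok_mod; auto.
Qed.

Lemma T1b v : tok v -> y (q v) mod n = y (p v - 1)%nat mod n.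
Proof.
  intros Hv. pose proof (pq_props v Hv).
  assert (hit v (q v) = true) by (apply hit_iff; auto; lia).
  unfold hit in H0. apply Z.eqb_eq in H0. rewrite V_pos in H0 by (auto; lia).
  destruct (Nat.ltb_spec (q v - 1) (p v)); [lia|].
  destruct (Nat.ltb_spec (q v - 1) (q v)); [|lia]. rewrite <- H0. apply ypm1; auto.
Qed.

Lemma T1c v : tok v -> y (q v - 1)%nat mod n = v.
Proof.
  intros Hv. pose proof (pq_props v Hv). pose proof (ell_pq v Hv).
  assert (y (q v - 1)%nat = y (q v) - ell (q v)) by (unfold ell; lia).
  rewrite H1. transitivity (v mod n); [|apply tok_mod; auto].
  pose proof (T1b v Hv). pose proof (ypm1 v Hv).
  destruct (modeq_ex n _ _ npos H2) as [k Hk].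
  destruct (modeq_ex n _ _ npos H3) as [k' Hk'].
  apply ex_modeq with (k - k' - 1). nia.
Qed.

Lemma T2a v t : tok v -> (t <= N)%nat -> (t < p v \/ q v <= t)%nat -> y t mod n <> v.
Proof.
  intros Hv Ht H E. apply (tok_ne_y v t Hv Ht). rewrite E, V_pos by auto.
  destruct (Nat.ltb_spec t (p v)); [apply tok_mod; auto|].
  destruct (Nat.ltb_spec t (q v)); [lia|].
  rewrite <- (tok_mod v Hv) at 2. apply ex_modeq with (-1). lia.
Qed.

Lemma T2b v t : tok v -> (p v <= t < q v)%nat -> y t mod n <> y (p v - 1)%nat mod n.
Proof.
  intros Hv H E. pose proof (pq_props v Hv). apply (tok_ne_y v t Hv ltac:(lia)).
  rewrite E, V_pos by (auto; lia).
  destruct (Nat.ltb_spec t (p v)); [lia|].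
  destruct (Nat.ltb_spec t (q v)); [|lia]. apply ypm1; auto.
Qed.

Definition mm (t : nat) : Z := W (t-1)%nat (y t) - y 0%nat.

Lemma mm_tok t : (1 <= t <= N)%nat -> mm t = y t - y 0%nat + (tokhit t - V (t-1)%nat (tokhit t)).
Proof.
  intros Ht. destruct (tokhit_ok t Ht) as [Hv Hh]. unfold hit in Hh. apply Z.eqb_eq in Hh.
  destruct (modeq_ex n _ _ npos (eq_sym Hh)) as [k Hk].
  unfold mm. rewrite Hk, W_per, WV by lia. lia.
Qed.

Lemma tokhit_pq t : (1 <= t <= N)%nat -> t = p (tokhit t) \/ t = q (tokhit t).
Proof. intros Ht. destruct (tokhit_ok t Ht). apply hit_iff; auto. Qed.

Lemma tokhit_p v : tok v -> tokhit (p v) = v.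
Proof. intros Hv. pose proof (pq_props v Hv). symmetry. apply tokhit_uniq; auto; [lia|].
  apply hit_iff; auto; lia. Qed.

Lemma tokhit_q v : tok v -> tokhit (q v) = v.
Proof. intros Hv. pose proof (pq_props v Hv). symmetry. apply tokhit_uniq; auto; [lia|].
  apply hit_iff; auto; lia. Qed.

Lemma mm_p v : tok v -> mm (p v) = y (p v) - y 0%nat.
Proof. intros Hv. pose proof (pq_props v Hv). rewrite mm_tok by lia. rewrite tokhit_p by auto.
  rewrite V_pos by (auto; lia). destruct (Nat.ltb_spec (p v - 1) (p v)); lia. Qed.

Lemma mm_q v : tok v -> mm (q v) = y (q v) - y 0%nat + ell (p v).
Proof. intros Hv. pose proof (pq_props v Hv). rewrite mm_tok by lia. rewrite tokhit_q by auto.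
  rewrite V_pos by (auto; lia). destruct (Nat.ltb_spec (q v - 1) (p v)); [lia|].
  destruct (Nat.ltb_spec (q v - 1) (q v)); lia. Qed.

Lemma ell_range t : (1 <= t <= N)%nat -> 0 < ell t < n.
Proof.
  intros Ht. destruct (tokhit_ok t Ht) as [Hv _]. pose proof (pq_props _ Hv).
  pose proof (ell_pq _ Hv). pose proof (ell_pos (p (tokhit t)) ltac:(lia)).
  pose proof (ell_pos (q (tokhit t)) ltac:(lia)).
  destruct (tokhit_pq t Ht) as [E|E]; rewrite E; lia.
Qed.

Definition dep (k : Z) (i : nat) : bool := Z.eqb ((y (i-1)%nat - k) mod n) 0.

Lemma modsub0 a b : (a - b) mod n = 0 <-> a mod n = b mod n.
Proof.
  split; intros H.
  - pose proof (Z.div_mod (a - b) n ltac:(lia)). rewrite H in H0.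
    apply ex_modeq with ((a - b) / n). lia.
  - destruct (modeq_ex n a b npos H) as [k ->].
    replace (b + k*n - b) with (0 + k*n) by lia. rewrite Z_mod_plus_full. auto.
Qed.

Lemma dep_iff k i : dep k i = true <-> y (i-1)%nat mod n = k mod n.
Proof. unfold dep. rewrite Z.eqb_eq. apply modsub0. Qed.

Lemma k_tok k v : 1 <= k <= n -> tok v -> k mod n = v -> k = v.
Proof.
  intros Hk Hv E. unfold tok in Hv. destruct (Z.eq_dec k n).
  - rewrite e, Z_mod_same_full in E. lia.
  - rewrite Z.mod_small in E; lia.
Qed.

Definition Cm : Prop := forall j u w, (1 <= j < N)%nat -> tok u -> tok w ->
  j = q u -> S j = p w -> ell (p u) < ell (S j).

Definition Cc : Prop := forall k i i', 1 <= k <= n -> (1 <= i < i' /\ i' <= N)%nat ->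
  dep k i = true -> dep k i' = true -> (forall t, (i < t < i')%nat -> dep k t = false) ->
  (k = n \/ (i' < q k)%nat) -> ell i < ell i'.

Lemma ellS j : y (S j) = y j + ell (S j).
Proof. unfold ell. simpl. rewrite Nat.sub_0_r. lia. Qed.

Lemma mm_cases t : (1 <= t <= N)%nat ->
  (mm t = y t - y 0%nat) \/ (exists u, tok u /\ t = q u /\ mm t = y t - y 0%nat + ell (p u)).
Proof.
  intros Ht. destruct (tokhit_ok t Ht) as [Hv _].
  destruct (tokhit_pq t Ht) as [E|E].
  - left. rewrite E at 1 2. apply mm_p; auto.
  - right. exists (tokhit t). split; auto. split; auto. rewrite E at 1 2. apply mm_q; auto.
Qed.

Lemma mm_inc_iff : (forall j, (1 <= j < N)%nat -> mm j < mm (S j)) <-> Cm.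
Proof.
  split.
  - intros H j u w Hj Hu Hw Eq Ep. specialize (H j Hj).
    pose proof (mm_q u Hu) as H0. pose proof (mm_p w Hw) as H1.
    rewrite <- Eq in H0. rewrite <- Ep in H1. rewrite H0, H1, ellS in H. lia.
  - intros H j Hj.
    pose proof (ell_range (S j) ltac:(lia)).
    destruct (mm_cases j ltac:(lia)) as [E1|[u [Hu [Eq E1]]]];
    destruct (mm_cases (S j) ltac:(lia)) as [E2|[w [Hw [Eq2 E2]]]];
    rewrite E1, E2, ellS.
    + lia.
    + pose proof (pq_props w Hw). pose proof (ell_pos (p w) ltac:(lia)). lia.
    + destruct (tokhit_ok (S j) ltac:(lia)) as [Hw _].
      destruct (tokhit_pq (S j) ltac:(lia)) as [Ep|Ep].
      * specialize (H j u _ Hj Hu Hw Eq Ep). lia.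
      * exfalso. pose proof (mm_q _ Hw) as M. rewrite <- Ep in M.
        pose proof (pq_props _ Hw). pose proof (ell_pos (p (tokhit (S j))) ltac:(lia)). lia.
    + pose proof (ell_pq w Hw) as A1. rewrite <- Eq2 in A1.
      pose proof (ell_pq u Hu) as A2. rewrite <- Eq in A2. pose proof (ell_range j ltac:(lia)). lia.
Qed.

Lemma Cc_Cm : Cc -> Cm.
Proof.
  intros H j u w Hj Hu Hw Eq Ep.
  pose proof (pq_props u Hu) as Pu. pose proof (pq_props w Hw) as Pw.
  set (k := if Z.eqb (y j mod n) 0 then n else y j mod n).
  assert (Hk : 1 <= k <= n /\ k mod n = y j mod n).
  { unfold k. pose proof (Z.mod_pos_bound (y j) n ltac:(lia)).
    destruct (Z.eqb_spec (y j mod n) 0).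
    - rewrite Z_mod_same_full. lia.
    - rewrite Z.mod_mod by lia. lia. }
  apply (H k (p u) (S j)).
  - lia.
  - lia.
  - apply dep_iff. rewrite (proj2 Hk), Eq, T1b; auto.
  - apply dep_iff. simpl. rewrite Nat.sub_0_r. rewrite (proj2 Hk). auto.
  - intros t Ht. destruct (dep k t) eqn:D; auto. apply dep_iff in D.
    exfalso. apply (T2b u (t-1)); auto; [lia|]. rewrite D, (proj2 Hk), Eq, T1b; auto.
  - unfold k. destruct (Z.eqb_spec (y j mod n) 0); [left; auto|right].
    assert (Hk2 : tok (y j mod n)).
    { unfold tok. pose proof (Z.mod_pos_bound (y j) n ltac:(lia)). lia. }
    assert (S j <= q (y j mod n))%nat.
    { destruct (Nat.le_gt_cases (S j) (q (y j mod n))); auto. exfalso.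
      apply (T2a (y j mod n) j Hk2); [lia|lia|]. auto. }
    destruct (Nat.eq_dec (S j) (q (y j mod n))); [|lia]. exfalso.
    pose proof (tokhit_q _ Hk2). rewrite <- e in H1. rewrite Ep, tokhit_p in H1 by auto.
    rewrite <- H1 in e. lia.
Qed.

Lemma Cm_Cc : Cm -> Cc.
Proof.
  intros H k i i' Hk Hii Di Di' Dbt Hcond.
  destruct (tokhit_ok i ltac:(lia)) as [Hu _]. set (u := tokhit i) in *.
  pose proof (pq_props u Hu) as Pu.
  apply dep_iff in Di. apply dep_iff in Di'.
  destruct (tokhit_pq i ltac:(lia)) as [Ei|Ei]; fold u in Ei.
  -
    assert (Eq : q u = (i' - 1)%nat).
    { destruct (Nat.lt_total (i'-1) (q u)) as [Hl|[He|Hg]].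
      - exfalso. apply (T2b u (i'-1)); [auto|lia|]. rewrite Di', <- Ei, Di. auto.
      - auto.
      - exfalso. specialize (Dbt (S (q u)) ltac:(lia)).
        assert (dep k (S (q u)) = true); [|congruence].
        apply dep_iff. simpl. rewrite Nat.sub_0_r. rewrite T1b, <- Ei, Di; auto. }
    destruct (tokhit_ok i' ltac:(lia)) as [Hw _]. set (w := tokhit i') in *.
    pose proof (pq_props w Hw) as Pw.
    destruct (tokhit_pq i' ltac:(lia)) as [Ei'|Ei']; fold w in Ei'.
    + specialize (H (i'-1)%nat u w ltac:(lia) Hu Hw (eq_sym Eq)).
      replace (S (i'-1)) with i' in H by lia. rewrite Ei. apply H. auto.
    + exfalso. assert (k = w).
      { apply k_tok; auto. rewrite <- Di'. rewrite Ei' at 1. apply T1c; auto. }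
      destruct Hcond as [Hc|Hc]; [unfold tok in Hw; lia|]. subst k. lia.
  - exfalso. assert (k = u).
    { apply k_tok; auto. rewrite <- Di. rewrite Ei at 1. apply T1c; auto. }
    apply (T2a u (i'-1)); [auto|lia|lia|]. rewrite Di'. subst k. apply tok_mod; auto.
Qed.

Definition NrY (k : Z) : list Z := map (fun i => modn1 n (y i)) (filter (dep k) (seq 1 N)).

Lemma modn1_range x : 1 <= modn1 n x <= n.
Proof. unfold modn1. pose proof (Z.mod_pos_bound (x - 1) n ltac:(lia)). lia. Qed.

Lemma modn1_mod x : modn1 n x mod n = x mod n.
Proof. unfold modn1. pose proof (Z.div_mod (x - 1) n ltac:(lia)).
  apply ex_modeq with (- ((x - 1) / n)). lia. Qed.

Lemma root_val i : (1 <= i <= N)%nat -> dep n i = true -> modn1 n (y i) = ell i.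
Proof.
  intros Hi D. apply dep_iff in D. rewrite Z_mod_same_full in D.
  pose proof (ell_range i Hi). unfold modn1.
  destruct (modeq_ex n _ 0 npos D) as [k Hk].
  replace (y i - 1) with ((ell i - 1) + k*n) by (unfold ell; lia).
  rewrite Z_mod_plus_full, Z.mod_small; lia.
Qed.

Lemma k_val k i : 1 <= k < n -> (1 <= i <= N)%nat -> dep k i = true -> (modn1 n (y i) - k) mod n = ell i.
Proof.
  intros Hk Hi D. apply dep_iff in D. pose proof (ell_range i Hi).
  pose proof (modn1_mod (y i)).
  destruct (modeq_ex n _ _ npos H0) as [a Ha].
  destruct (modeq_ex n _ _ npos D) as [b Hb].
  replace (modn1 n (y i) - k) with (ell i + (a + b) * n) by (unfold ell; nia).
  rewrite Z_mod_plus_full, Z.mod_small; lia.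
Qed.

Lemma NrY_elems k x : 1 <= k < n -> In x (NrY k) -> 1 <= x <= n /\ x <> k.
Proof.
  intros Hk Hx. unfold NrY in Hx. apply in_map_iff in Hx. destruct Hx as [i [<- Hi]].
  apply filter_In in Hi. destruct Hi as [Hi D]. apply in_seq in Hi.
  split; [apply modn1_range|]. intros E. apply dep_iff in D.
  apply (Hnc i ltac:(lia)). rewrite D, <- E, modn1_mod. auto.
Qed.

Lemma dep_le_q k t : tok k -> (1 <= t <= N)%nat -> dep k t = true -> (t <= q k)%nat.
Proof.
  intros Hk Ht D. apply dep_iff in D. rewrite (tok_mod k Hk) in D.
  destruct (Nat.le_gt_cases t (q k)); auto. exfalso.
  apply (T2a k (t-1) Hk); [lia|right; lia|auto].
Qed.

Lemma dep_q k : tok k -> dep k (q k) = true.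
Proof. intros Hk. apply dep_iff. rewrite T1c, tok_mod; auto. Qed.

Lemma NrY_nonempty k : tok k -> NrY k <> [].
Proof.
  intros Hk E. pose proof (pq_props k Hk).
  assert (In (modn1 n (y (q k))) (NrY k)).
  { unfold NrY. apply (in_map (fun i => modn1 n (y i))). apply filter_In. split; [apply in_seq; lia|apply dep_q; auto]. }
  rewrite E in H0. destruct H0.
Qed.

Lemma removelast_dep k : tok k ->
  removelast (filter (dep k) (seq 1 N)) = filter (dep k) (seq 1 (q k - 1)).
Proof.
  intros Hk. pose proof (pq_props k Hk).
  replace N with ((q k - 1) + S (N - q k))%nat at 1 by lia.
  rewrite seq_app, filter_app. replace (1 + (q k - 1))%nat with (q k) by lia.
  simpl seq. cbn [filter]. rewrite dep_q by auto.
  rewrite (filter_nil _ (seq (S (q k)) (N - q k))).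
  - apply removelast_last.
  - intros t Ht. apply in_seq in Ht. destruct (dep k t) eqn:D; auto.
    apply dep_le_q in D; auto; lia.
Qed.

Lemma CycY_iff : (Sorted Z.lt (NrY n) /\ forall k, 1 <= k < n -> cyc_cond (NrY k) k) <-> Cc.
Proof.
  assert (Hroot : Sorted Z.lt (NrY n) <-> Sorted Z.lt (map ell (filter (dep n) (seq 1 N)))).
  { unfold NrY. replace (map (fun i => modn1 n (y i)) (filter (dep n) (seq 1 N)))
      with (map ell (filter (dep n) (seq 1 N))); [tauto|].
    apply map_ext_in. intros i Hi. apply filter_In in Hi. destruct Hi as [Hi D].
    apply in_seq in Hi. symmetry. apply root_val; auto; lia. }
  assert (Hk : forall k, 1 <= k < n -> (cyc_cond (NrY k) k <->
      Sorted Z.lt (map ell (filter (dep k) (seq 1 (q k - 1)))))).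
  { intros k Hk. assert (Hkt : tok k) by (unfold tok; lia).
    rewrite (cyc_cond_iff n k (NrY k) (NrY_nonempty k Hkt) ltac:(lia) (fun x Hx => NrY_elems k x ltac:(lia) Hx)).
    unfold NrY. rewrite map_removelast, removelast_dep, map_map by auto.
    replace (map (fun x => (modn1 n (y x) - k) mod n) (filter (dep k) (seq 1 (q k - 1))))
      with (map ell (filter (dep k) (seq 1 (q k - 1)))); [tauto|].
    apply map_ext_in. intros i Hi. apply filter_In in Hi. destruct Hi as [Hi D].
    apply in_seq in Hi. pose proof (pq_props k Hkt). symmetry. apply k_val; auto; lia. }
  split.
  - intros [H1 H2] k i i' Hk' Hii Di Di' Hb Hc.
    destruct Hc as [Hc|Hc].
    + subst k. apply Hroot in H1. rewrite sorted_filter_seq in H1. apply H1; auto. lia.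
    + destruct (Z.eq_dec k n).
      * subst k. apply Hroot in H1. rewrite sorted_filter_seq in H1. apply H1; auto. lia.
      * specialize (H2 k ltac:(lia)). apply Hk in H2; [|lia].
        rewrite sorted_filter_seq in H2. apply H2; auto. lia.
  - intros H. split.
    + apply Hroot. apply sorted_filter_seq. intros i i' Hii Pi Pi' Hb.
      apply (H n); auto; lia.
    + intros k Hk'. apply Hk; auto. apply sorted_filter_seq. intros i i' Hii Pi Pi' Hb.
      assert (Hkt : tok k) by (unfold tok; lia). pose proof (pq_props k Hkt).
      apply (H k); auto; lia.
Qed.

Lemma y0_mult : exists c, y 0%nat = c * n.
Proof. pose proof y0mod. rewrite <- (Z.mod_0_l n) in H by lia.
  destruct (modeq_ex n _ _ npos H) as [c Hc]. exists c. lia. Qed.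

Lemma mm_mod j : (1 <= j <= N)%nat -> mm j mod n = W (j-1)%nat (y j) mod n.
Proof. intros. destruct y0_mult as [c Hc]. unfold mm. apply ex_modeq with (-c). lia. Qed.

Lemma mm_nz j : (1 <= j <= N)%nat -> mm j mod n <> 0 mod n.
Proof.
  intros Hj E. rewrite mm_mod in E by auto. rewrite Z.mod_0_l in E by lia.
  apply (Hnc j Hj). apply (W_cinj (j-1)); [lia|]. rewrite E, Wy by lia. rewrite y0mod. auto.
Qed.

Lemma conj_formula j x : (1 <= j <= N)%nat ->
  W (j-1)%nat (Rf j (V (j-1)%nat x)) = refl n 0 (mm j) x.
Proof.
  intros Hj. destruct y0_mult as [c Hc].
  pose proof (mm_nz j Hj) as Hm. pose proof (mm_mod j Hj) as Hmm.
  set (z := V (j-1)%nat x).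
  assert (Hx : x = W (j-1)%nat z) by (unfold z; rewrite WV; auto; lia).
  assert (Hy : W (j-1)%nat (y (j-1)%nat) = y 0%nat) by (apply Wy; lia).
  unfold Rf. pose proof (Hnc j Hj) as Hab.
  destruct (refl_case n (y (j-1)%nat) (y j) z npos Hab) as [[H1 H2]|[[H1 H2]|[H1 [H4 H2]]]]; rewrite H2.
  - destruct (modeq_ex n _ _ npos H1) as [k Hk].
    replace (z - y (j-1)%nat + y j) with (y j + k*n) by lia. rewrite W_per.
    assert (x = y 0%nat + k*n) by (rewrite Hx, Hk, W_per, Hy; auto).
    unfold refl. destruct (Z.eq_dec (x mod n) (0 mod n)).
    + unfold mm. lia.
    + exfalso. apply n0. rewrite H. apply ex_modeq with (c + k). lia.
  - destruct (modeq_ex n _ _ npos H1) as [k Hk].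
    replace (z - y j + y (j-1)%nat) with (y (j-1)%nat + k*n) by lia. rewrite W_per, Hy.
    assert (x = W (j-1)%nat (y j) + k*n) by (rewrite Hx, Hk, W_per; auto).
    unfold refl. destruct (Z.eq_dec (x mod n) (0 mod n)).
    + exfalso. apply Hm. rewrite <- e, Hmm, H. apply ex_modeq with (-k). lia.
    + destruct (Z.eq_dec (x mod n) (mm j mod n)).
      * unfold mm. lia.
      * exfalso. apply n1. rewrite Hmm, H. apply ex_modeq with k. lia.
  - rewrite <- Hx. unfold refl. destruct (Z.eq_dec (x mod n) (0 mod n)).
    + exfalso. apply H1. apply (W_cinj (j-1)); [lia|]. rewrite <- Hx, Hy, e, y0mod. auto.
    + destruct (Z.eq_dec (x mod n) (mm j mod n)); auto.
      exfalso. apply H4. apply (W_cinj (j-1)); [lia|]. rewrite <- Hx, e, Hmm. auto.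
Qed.

End Main.

Fixpoint mk_y (a b : nat -> Z) (i : nat) : Z :=
  match i with O => a O | S i' => mk_y a b i' + (b (S i') - a i') end.

Lemma firstn_S_app {A} (l : list A) j d : (j < length l)%nat ->
  firstn (S j) l = firstn j l ++ [nth j l d].
Proof.
  revert j. induction l as [|x l IH]; intros j Hj; simpl in Hj; [lia|].
  destruct j; [simpl; auto|].
  change (firstn (S (S j)) (x :: l)) with (x :: firstn (S j) l).
  rewrite IH by lia. auto.
Qed.

Lemma prodl_app_one l f x : prodl (l ++ [f]) x = prodl l (f x).
Proof. induction l; simpl; auto. rewrite IHl. auto. Qed.

Lemma refl_cong_pres n a b x : n > 0 -> a mod n = b mod n -> refl n a b x mod n = x mod n.
Proof.
  intros Hn H. unfold refl.
  destruct (Z.eq_dec (x mod n) (a mod n)).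
  - rewrite mod_shift; auto. congruence.
  - destruct (Z.eq_dec (x mod n) (b mod n)); auto. rewrite mod_shift; auto. congruence.
Qed.

Lemma mod_sub_cong n x x' k : n > 0 -> x mod n = x' mod n -> (x - k) mod n = (x' - k) mod n.
Proof. intros Hn H. destruct (modeq_ex n _ _ Hn H) as [c Hc]. apply ex_modeq with c. lia. Qed.

Theorem proposition4p4 (n : Z) (r : list (Z -> Z)) :
  2 <= n -> in_fact n r -> tree_like n r ->
  (forall j : nat, (1 <= j <= length r)%nat ->
     mval r j mod n <> 0 mod n /\
     forall x, conjr r j x = refl n 0 (mval r j) x) /\
  (cyclic n r <->
   forall j : nat, (1 <= j < length r)%nat -> mval r j < mval r (S j)).
Proof.
  intros Hn [Hlen [Hrefl Hprod]] [a [b Htl]].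
  assert (Hnp : n > 0) by lia.
  set (N := length r) in *.
  set (y := mk_y a b).
  destruct Htl as [Hab Hcong].
  assert (Hya : forall i, (i < N)%nat -> y i mod n = a i mod n).
  { induction i; intros Hi; [auto|].
    rewrite (Hcong (S i)) by (unfold N in Hi; lia).
    change (y (S i)) with (y i + (b (S i) - a i)).
    specialize (IHi ltac:(lia)). destruct (modeq_ex n _ _ Hnp IHi) as [c Hc].
    apply ex_modeq with c. lia. }
  assert (HyS : forall i, y (S i) - y i = b (S i) - a i) by (intros i; change (y (S i)) with (y i + (b (S i) - a i)); lia).
  assert (Hyr : forall i, (1 <= i <= N)%nat -> forall x, nthr r i x = refl n (y (i-1)%nat) (y i) x).
  { intros i Hi x. rewrite (proj2 (Hab i Hi)). apply refl_shift; auto.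
    - symmetry. apply Hya. lia.
    - destruct i; [lia|]. simpl. rewrite Nat.sub_0_r. rewrite HyS. auto. }
  assert (Hinc : forall i, (1 <= i <= N)%nat -> y (i-1)%nat < y i).
  { intros i Hi. destruct i; [lia|]. simpl (S i - 1)%nat. rewrite Nat.sub_0_r.
    pose proof (HyS i). pose proof (proj1 (Hab (S i) Hi)). simpl in H0. rewrite Nat.sub_0_r in H0. lia. }
  assert (Hnc : forall i, (1 <= i <= N)%nat -> y (i-1)%nat mod n <> y i mod n).
  { intros i Hi E.
    assert (HR : is_reflection n (nthr r i)).
    { rewrite Forall_forall in Hrefl. apply Hrefl. unfold nthr. apply nth_In. lia. }
    destruct HR as [i0 [j0 [Hij Heq]]].
    pose proof (refl_cong_pres n _ _ i0 Hnp E). rewrite <- Hyr, Heq in H by auto.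
    unfold refl in H. destruct (Z.eq_dec (i0 mod n) (i0 mod n)); [|congruence].
    rewrite mod_shift in H; auto. }
  assert (HN : Z.of_nat N = 2 * n - 2) by auto.
  assert (Hfirst : forall j, (j <= N)%nat -> forall x, prodl (firstn j r) x = W n y j x).
  { induction j; intros Hj x; [auto|].
    rewrite (firstn_S_app r j (fun k => k)) by lia. rewrite prodl_app_one.
    simpl W. rewrite IHj by lia. f_equal. unfold Rf. rewrite <- Hyr by lia.
    unfold nthr. simpl. rewrite Nat.sub_0_r. auto. }
  assert (Hrev : forall j, (j <= N)%nat -> forall x, prodl (rev (firstn j r)) x = V n y j x).
  { induction j; intros Hj x; [auto|].
    rewrite (firstn_S_app r j (fun k => k)) by lia. rewrite rev_unit. simpl prodl.
    simpl V. rewrite <- IHj by lia. unfold Rf. rewrite <- Hyr by lia.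
    unfold nthr. simpl. rewrite Nat.sub_0_r. auto. }
  assert (Hlam : forall x, W n y N x = lambda n x).
  { intros x. rewrite <- Hfirst by lia. unfold N. rewrite firstn_all. auto. }
  assert (Hconj : forall j, (1 <= j <= N)%nat -> forall x,
            conjr r j x = W n y (j-1)%nat (Rf n y j (V n y (j-1)%nat x))).
  { intros j Hj x. unfold conjr. rewrite Hfirst, Hrev by lia. unfold Rf. rewrite Hyr by lia. auto. }
  pose proof (conj_formula n N y Hn HN Hinc Hnc Hlam) as CF.
  pose proof (mm_nz n N y Hn HN Hinc Hnc Hlam) as MN.
  pose proof (CycY_iff n N y Hn HN Hinc Hnc Hlam) as CY.
  pose proof (Cc_Cm n N y Hn HN Hinc Hnc Hlam) as CCM.
  pose proof (Cm_Cc n N y Hn HN Hinc Hnc Hlam) as CMC.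
  pose proof (mm_inc_iff n N y Hn HN Hinc Hnc Hlam) as MI.
  assert (Hmval : forall j, (1 <= j <= N)%nat -> mval r j = mm n y j).
  { intros j Hj. unfold mval. rewrite Hconj, CF by auto.
    unfold refl. destruct (Z.eq_dec (0 mod n) (0 mod n)); [lia|congruence]. }
  split.
  - intros j Hj. rewrite Hmval by auto. split.
    + apply MN; auto.
    + intros x. rewrite Hconj, CF by auto. auto.
  - assert (HNr : forall a' b', tree_like_with n r a' b' -> forall k, Nr n r a' b' k = NrY n N y k).
    { intros a' b' [Hab' _] k. unfold Nr, NrY. fold N.
      rewrite (filter_ext_in _ (dep n y k)).
      - apply map_ext_in. intros i Hi. apply filter_In in Hi. destruct Hi as [Hi _].
        apply in_seq in Hi.
        destruct (refl_uniq n (a' (i-1)%nat) (b' i) (y (i-1)%nat) (y i) Hnp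
                   (proj1 (Hab' i ltac:(lia))) (Hinc i ltac:(lia))) as [_ E].
        { intros x. rewrite <- (proj2 (Hab' i ltac:(lia))). apply Hyr. lia. }
        unfold modn1. rewrite (mod_sub_cong n _ _ 1 Hnp E). auto.
      - intros i Hi. apply in_seq in Hi.
        destruct (refl_uniq n (a' (i-1)%nat) (b' i) (y (i-1)%nat) (y i) Hnp
                   (proj1 (Hab' i ltac:(lia))) (Hinc i ltac:(lia))) as [E _].
        { intros x. rewrite <- (proj2 (Hab' i ltac:(lia))). apply Hyr. lia. }
        unfold dep. rewrite (mod_sub_cong n _ _ k Hnp E). auto. }
    transitivity (Sorted Z.lt (NrY n N y n) /\ forall k, 1 <= k < n -> cyc_cond (NrY n N y k) k).
    { split.
      - intros [a' [b' [Htl' [H1 H2]]]]. rewrite (HNr a' b' Htl') in H1. split; auto.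
        intros k Hk. rewrite <- (HNr a' b' Htl'). auto.
      - intros [H1 H2]. assert (Htl : tree_like_with n r a b) by (split; auto).
        exists a, b. split; auto. rewrite (HNr a b Htl). split; auto.
        intros k Hk. rewrite (HNr a b Htl). auto. }
    rewrite CY.
    transitivity (Cm n N y).
    { split; [apply CCM | apply CMC]. }
    rewrite <- MI.
    split; intros H j Hj; specialize (H j Hj); rewrite ?Hmval in * by lia; auto.
Qed.
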